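(* Let $\mathcal{I}$ be a $\sigma$-ideal on $\mathbb{R}$ satisfying the standing assumptions. If an $\mathcal{I}$-Luzin set exists, then there exists a strong $\mathcal{I}$-Luzin set which is linearly independent over $\mathbb{Q}$.
   Context: Standing assumptions on $\mathcal{I}$: $\mathcal{I}$ is a $\sigma$-ideal of subsets of $\mathbb{R}$ such that $\mathbb{R}\notin\mathcal{I}$; $x+I\in\mathcal{I}$ and $xI\in\mathcal{I}$ for all $x\in\mathbb{R}$, $I\in\mathcal{I}$; every member of $\mathcal{I}$ is contained in a Borel member of $\mathcal{I}$; and for all Borel $A,B\notin\mathcal{I}$ the set $A-B$ has nonempty interior. A set $L\subseteq\mathbb{R}$ is $\mathcal{I}$-Luzin if $|L|=\mathfrak{c}$ and $L\cap I$ is countable for every $I\in\mathcal{I}$; it is strong $\mathcal{I}$-Luzin if moreover $L\cap B$ is uncountable for every Borel set $B\notin\mathcal{I}$. *)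

(* Defs.v *)
From Stdlib Require Import Reals QArith Qreals List.
Open Scope R_scope.

Definition set := R -> Prop.
Definition subset (A B : set) : Prop := forall x, A x -> B x.
Definition full : set := fun _ => True.
Definition empty : set := fun _ => False.

Definition is_open (A : set) : Prop :=
  forall x, A x -> exists eps, 0 < eps /\ forall y, Rabs (y - x) < eps -> A y.

Inductive borel : set -> Prop :=
  | borel_open : forall A, is_open A -> borel A
  | borel_compl : forall A, borel A -> borel (fun x => ~ A x)
  | borel_cunion : forall F : nat -> set, (forall n, borel (F n)) ->
      borel (fun x => exists n, F n x)
  | borel_ext : forall A B, borel A -> (forall x, A x <-> B x) -> borel B.

Definition translate (x : R) (A : set) : set := fun z => exists y, A y /\ z = x + y.
Definition scale (x : R) (A : set) : set := fun z => exists y, A y /\ z = x * y.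
Definition setdiff_alg (A B : set) : set := fun z => exists a b, A a /\ B b /\ z = a - b.
Definition nonempty_interior (A : set) : Prop :=
  exists x eps, 0 < eps /\ forall y, Rabs (y - x) < eps -> A y.

Definition sigma_ideal (I : set -> Prop) : Prop :=
  I empty /\
  (forall A B, I B -> subset A B -> I A) /\
  (forall F : nat -> set, (forall n, I (F n)) -> I (fun x => exists n, F n x)).

Definition standing_assumptions (I : set -> Prop) : Prop :=
  sigma_ideal I /\
  ~ I full /\
  (forall x A, I A -> I (translate x A)) /\
  (forall x A, I A -> I (scale x A)) /\
  (forall A, I A -> exists B, borel B /\ I B /\ subset A B) /\
  (forall A B, borel A -> borel B -> ~ I A -> ~ I B ->
     nonempty_interior (setdiff_alg A B)).

Definition countable (A : set) : Prop :=
  exists f : R -> nat, forall x y, A x -> A y -> f x = f y -> x = y.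

Definition card_continuum (A : set) : Prop :=
  exists f : R -> R, (forall x, A (f x)) /\
    (forall x y, f x = f y -> x = y) /\
    (forall y, A y -> exists x, f x = y).

Definition I_Luzin (I : set -> Prop) (L : set) : Prop :=
  card_continuum L /\ forall A, I A -> countable (fun x => L x /\ A x).

Definition strong_I_Luzin (I : set -> Prop) (L : set) : Prop :=
  I_Luzin I L /\ forall B, borel B -> ~ I B -> ~ countable (fun x => L x /\ B x).

Definition lin_indep_Q (L : set) : Prop :=
  forall l : list (Q * R),
    NoDup (map snd l) ->
    Forall (fun p => L (snd p)) l ->
    fold_right (fun p s => Q2R (fst p) * snd p + s) 0 l = 0 ->
    Forall (fun p => Qeq (fst p) 0%Q) l.

(* Main.v *)
Require Import Defs.
From Stdlib Require Import Reals QArith Qreals List Lia Lra ZArith.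
From Stdlib Require Import Classical ClassicalEpsilon FunctionalExtensionality ProofIrrelevance PropExtensionality.
From Stdlib Require Cantor.
From Stdlib Require Classical_Prop.
Open Scope R_scope.

Definition inj (A B : Type) := exists f : A -> B, forall x y, f x = f y -> x = y.
Definition Fset (B : Type) := list ((B + nat) * Q).

Lemma inj_trans A B C : inj A B -> inj B C -> inj A C.
Proof. intros [f Hf] [g Hg]. exists (fun a => g (f a)). auto. Qed.

Lemma left_inv A B (f : A -> B) (a0 : A) :
  exists g : B -> A, forall a, (forall x y, f x = f y -> x = y) -> g (f a) = a.
Proof.
  exists (fun b => match excluded_middle_informative (exists a, f a = b) with
     | left H => proj1_sig (constructive_indefinite_description _ H)
     | right _ => a0 end).
  intros a Hf. destruct (excluded_middle_informative _) as [H|H].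
  - destruct (constructive_indefinite_description _ H) as [x Hx]; simpl. auto.
  - exfalso; apply H; eauto.
Qed.

Section Flat.
Variables (A B : Type) (f : A -> Fset B).
Definition enc_item (p : (A + nat) * Q) : Fset B :=
  match p with
  | (inl a, q) => (@inr B nat 0%nat, q) :: (@inr B nat (length (f a)), 0%Q) :: f a
  | (inr n, q) => (@inr B nat 1%nat, q) :: (@inr B nat n, 0%Q) :: nil
  end.
Definition enc (l : Fset A) : Fset B := flat_map enc_item l.

Lemma app_len_inj (X : Type) (l1 l2 r1 r2 : list X) :
  length l1 = length l2 -> l1 ++ r1 = l2 ++ r2 -> l1 = l2 /\ r1 = r2.
Proof.
  revert l2; induction l1; destruct l2; simpl; intros; try discriminate; auto.
  inversion H0; subst. destruct (IHl1 l2); auto. subst; auto.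
Qed.

Lemma enc_item_inj : (forall x y, f x = f y -> x = y) ->
  forall a b r1 r2, enc_item a ++ r1 = enc_item b ++ r2 -> a = b /\ r1 = r2.
Proof.
  intros Hf [[a|n] q] [[b|m] q'] r1 r2; simpl; intro H; inversion H; subst.
  - destruct (app_len_inj _ _ _ _ _ H2 H3) as [H5 H6]. rewrite (Hf _ _ H5). auto.
  - auto.
Qed.

Lemma enc_inj : (forall x y, f x = f y -> x = y) ->
  forall l1 l2, enc l1 = enc l2 -> l1 = l2.
Proof.
  intros Hf l1; induction l1 as [|a l1 IH]; destruct l2 as [|b l2]; simpl; intros H; auto.
  - destruct b as [[b|m] q]; discriminate.
  - destruct a as [[a|m] q]; discriminate.
  - destruct (enc_item_inj Hf a b _ _ H). subst. f_equal; auto.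
Qed.
End Flat.

Lemma Fset_flat A B : inj A (Fset B) -> inj (Fset A) (Fset B).
Proof. intros [f Hf]. exists (enc A B f). apply enc_inj; auto. Qed.

Definition zcode (z : Z) : nat := Cantor.to_nat (Z.to_nat z, Z.to_nat (- z)).
Lemma zcode_inj : forall x y, zcode x = zcode y -> x = y.
Proof.
  intros x y H. unfold zcode in H.
  apply (f_equal Cantor.of_nat) in H. rewrite !Cantor.cancel_of_to in H.
  inversion H. lia.
Qed.
Definition qcode (q : Q) : nat := Cantor.to_nat (zcode (Qnum q), Pos.to_nat (Qden q)).
Lemma qcode_inj : forall x y, qcode x = qcode y -> x = y.
Proof.
  intros [a b] [c d] H. unfold qcode in H; cbn [Qnum Qden] in H.
  apply (f_equal Cantor.of_nat) in H. rewrite !Cantor.cancel_of_to in H.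
  inversion H. apply zcode_inj in H1. apply Pos2Nat.inj in H2. subst; auto.
Qed.
Fixpoint lcode {X} (c : X -> nat) (l : list X) : nat :=
  match l with nil => 0%nat | x :: l => S (Cantor.to_nat (c x, lcode c l)) end.
Lemma lcode_inj X (c : X -> nat) : (forall x y, c x = c y -> x = y) ->
  forall l1 l2, lcode c l1 = lcode c l2 -> l1 = l2.
Proof.
  intros Hc l1; induction l1; destruct l2; cbn [lcode]; intros H; try discriminate; auto.
  apply (f_equal pred) in H; cbn [pred] in H. apply (f_equal Cantor.of_nat) in H. rewrite !Cantor.cancel_of_to in H.
  inversion H. f_equal; auto.
Qed.
Lemma Fset_empty_count : inj (Fset Empty_set) nat.
Proof.
  exists (lcode (fun p : (Empty_set + nat) * Q => match p with
     | (inl e, _) => match e with end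
     | (inr n, q) => Cantor.to_nat (n, qcode q) end)).
  apply lcode_inj. intros [[e|n] q] [[e'|n'] q'] H; try destruct e; try destruct e'.
  apply (f_equal Cantor.of_nat) in H. rewrite !Cantor.cancel_of_to in H.
  inversion H. apply qcode_inj in H2. subst; auto.
Qed.

Definition CS := nat -> bool.
Lemma C_uncount : ~ inj CS nat.
Proof.
  intros [f Hf]. destruct (left_inv _ _ f (fun _ => true)) as [g Hg].
  set (d := fun n => negb (g n n)).
  assert (E := Hg d Hf).
  assert (E2 : forall n, g (f d) n = d n) by (intro n; rewrite E; reflexivity).
  specialize (E2 (f d)). change (d (f d)) with (negb (g (f d) (f d))) in E2.
  destruct (g (f d) (f d)); discriminate.
Qed.

Lemma nat_min (P : nat -> Prop) : (exists n, P n) -> exists n, P n /\ forall k, (k < n)%nat -> ~ P k.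
Proof.
  intros [n Hn]. revert Hn. induction n as [n IH] using (well_founded_induction Wf_nat.lt_wf).
  intros Hn. destruct (classic (exists k, (k < n)%nat /\ P k)) as [[k [Hk Pk]]|H].
  - apply (IH k Hk Pk).
  - exists n; split; auto. intros k Hk Pk; apply H; eauto.
Qed.

Fixpoint psum (s : CS) (n : nat) : R :=
  match n with O => 0 | S k => psum s k + (if s k then (/4)^(S k) else 0) end.

Lemma pow4_pos n : 0 < (/4)^n.
Proof. apply pow_lt; lra. Qed.

Lemma psum_mono s n m : psum s n <= psum s (n + m).
Proof.
  induction m. rewrite Nat.add_0_r; lra.
  rewrite Nat.add_succ_r. simpl. assert (H := pow4_pos (S (n+m))). simpl in H.
  destruct (s (n+m)%nat); lra.
Qed.

Lemma psum_bound s n m : psum s (n + m) <= psum s n + /3 * (/4)^n - /3 * (/4)^(n+m).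
Proof.
  induction m. rewrite Nat.add_0_r; lra.
  rewrite Nat.add_succ_r. simpl. assert (H := pow4_pos (n+m)).
  destruct (s (n+m)%nat); lra.
Qed.

Definition vset (s : CS) : R -> Prop := fun y => exists n, y = psum s n.

Lemma vset_bound s : bound (vset s).
Proof.
  exists (/3). intros y [n ->]. assert (H := psum_bound s 0 n). simpl in H.
  assert (H' := pow4_pos n). lra.
Qed.

Definition vC (s : CS) : R :=
  proj1_sig (completeness (vset s) (vset_bound s) (ex_intro _ 0 (ex_intro _ O eq_refl))).

Lemma vC_ge s n : psum s n <= vC s.
Proof.
  unfold vC. destruct (completeness _ _ _) as [m [Hm1 Hm2]]. simpl.
  apply Hm1. exists n; auto.
Qed.

Lemma vC_le s n : vC s <= psum s n + /3 * (/4)^n.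
Proof.
  unfold vC. destruct (completeness _ _ _) as [m [Hm1 Hm2]]. simpl.
  apply Hm2. intros y [k ->]. destruct (Compare_dec.le_lt_dec n k).
  - replace k with (n + (k - n))%nat by lia. assert (H := psum_bound s n (k - n)).
    assert (H' := pow4_pos (n + (k-n))). lra.
  - replace n with (k + (n - k))%nat by lia. assert (H := psum_mono s k (n - k)).
    assert (H' := pow4_pos (k + (n-k))). lra.
Qed.

Lemma psum_agree s t n : (forall k, (k < n)%nat -> s k = t k) -> psum s n = psum t n.
Proof.
  induction n; simpl; intros H; auto. rewrite IHn by (intros; apply H; lia).
  rewrite (H n) by lia. auto.
Qed.

Lemma vC_lt s t n : (forall k, (k < n)%nat -> s k = t k) -> s n = true -> t n = false -> vC t < vC s.
Proof.
  intros H Hs Ht. assert (E := psum_agree s t n H).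
  assert (A1 := vC_ge s (S n)). assert (A2 := vC_le t (S n)). simpl in A1, A2.
  rewrite Hs in A1. rewrite Ht in A2. assert (P := pow4_pos (S n)). simpl in P. lra.
Qed.

Lemma vC_inj : forall s t, vC s = vC t -> s = t.
Proof.
  intros s t E. apply NNPP; intro ne.
  assert (ex : exists n, s n <> t n).
  { apply NNPP; intro H. apply ne, functional_extensionality. intro n.
    apply NNPP; intro H'. apply H; eauto. }
  destruct (nat_min _ ex) as [n [Hn Hmin]].
  assert (agree : forall k, (k < n)%nat -> s k = t k).
  { intros k Hk. apply NNPP; intro; eapply Hmin; eauto. }
  destruct (s n) eqn:Es, (t n) eqn:Et; try congruence.
  - assert (L := vC_lt s t n agree Es Et). lra.
  - assert (L := vC_lt t s n (fun k Hk => eq_sym (agree k Hk)) Et Es). lra.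
Qed.

Lemma C_inj_R : inj CS R.
Proof. exists vC. exact vC_inj. Qed.

Lemma R_uncount : ~ inj R nat.
Proof. intro H. apply C_uncount. eapply inj_trans; [apply C_inj_R|exact H]. Qed.

Lemma Q_dense_up (x eps : R) : 0 < eps -> exists q : Q, x < Q2R q < x + eps.
Proof.
  intros He. set (n := Z.to_nat (up (/ eps))).
  destruct (archimed (/ eps)) as [A1 A2].
  assert (Hie : 0 < / eps) by (apply Rinv_0_lt_compat; lra).
  assert (Hn : INR n = IZR (up (/eps))).
  { unfold n. rewrite INR_IZR_INZ. rewrite Z2Nat.id; auto.
    apply le_IZR. lra. }
  set (N := INR n + 1).
  assert (HN : N > / eps) by (unfold N; lra).
  assert (HN0 : 0 < N) by lra.
  assert (HNe : N * eps > 1).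
  { apply Rmult_gt_compat_r with (r := eps) in HN; auto.
    rewrite Rinv_l in HN; lra. }
  set (z := up (x * N)). destruct (archimed (x * N)) as [B1 B2].
  exists (z # Pos.of_succ_nat n).
  unfold Q2R. cbn [Qnum Qden]. rewrite Zpos_P_of_succ_nat, succ_IZR, <- INR_IZR_INZ.
  fold N. set (y := IZR z * / N).
  assert (Ny : N * y = IZR z) by (unfold y; field; lra).
  fold z in B1, B2. split; nra.
Qed.

Lemma Q_dense_down (x eps : R) : 0 < eps -> exists q : Q, x - eps < Q2R q < x.
Proof.
  intros He. destruct (Q_dense_up (- x) eps He) as [q Hq].
  exists (- q)%Q. rewrite Q2R_opp. lra.
Qed.

Definition pcode (p : Q * Q) : nat := Cantor.to_nat (qcode (fst p), qcode (snd p)).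
Lemma pcode_inj : forall x y, pcode x = pcode y -> x = y.
Proof.
  intros [a b] [c d] H. unfold pcode in H; cbn [fst snd] in H.
  apply (f_equal Cantor.of_nat) in H. rewrite !Cantor.cancel_of_to in H.
  inversion H. apply qcode_inj in H1. apply qcode_inj in H2. subst; auto.
Qed.

Definition qqe : nat -> Q * Q :=
  proj1_sig (constructive_indefinite_description _ (left_inv _ _ pcode (0%Q, 0%Q))).
Lemma qqe_surj : forall p, qqe (pcode p) = p.
Proof.
  intros p. unfold qqe. destruct (constructive_indefinite_description _ _) as [g Hg]; simpl.
  apply Hg, pcode_inj.
Qed.

Inductive bcode : Type :=
 | BOpen (s : nat -> bool) | BCompl (c : bcode) | BUnion (f : nat -> bcode).

Fixpoint decode (c : bcode) : set :=
  match c with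
  | BOpen s => fun x => exists n, s n = true /\ Q2R (fst (qqe n)) < x < Q2R (snd (qqe n))
  | BCompl c => fun x => ~ decode c x
  | BUnion f => fun x => exists n, decode (f n) x
  end.

Lemma set_ext (A B : set) : (forall x, A x <-> B x) -> A = B.
Proof. intros H. apply functional_extensionality; intro x. apply propositional_extensionality; auto. Qed.

Lemma borel_code : forall A, borel A -> exists c, decode c = A.
Proof.
  induction 1 as [A HA|A HA IH|F HF IH|A B HA IH HAB].
  - exists (BOpen (fun n => if excluded_middle_informative
        (forall y, Q2R (fst (qqe n)) < y < Q2R (snd (qqe n)) -> A y) then true else false)).
    apply set_ext; intro x; simpl; split.
    + intros [n [Hn Hx]]. destruct (excluded_middle_informative _) as [H|H]; try discriminate. auto.
    + intros Ax. destruct (HA x Ax) as [eps [He Hb]].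
      destruct (Q_dense_down x eps He) as [a Ha]. destruct (Q_dense_up x eps He) as [b Hb'].
      exists (pcode (a, b)). rewrite qqe_surj. cbn [fst snd]. split; [|lra].
      destruct (excluded_middle_informative _) as [H|H]; auto. exfalso; apply H.
      intros y Hy. apply Hb. apply Rabs_def1; lra.
  - destruct IH as [c Hc]. exists (BCompl c). simpl. rewrite Hc. auto.
  - assert (ch : forall n, {c | decode c = F n}).
    { intro n. apply constructive_indefinite_description. auto. }
    exists (BUnion (fun n => proj1_sig (ch n))). simpl. apply set_ext; intro x.
    split; intros [n Hn]; exists n; destruct (ch n) as [c Hc]; simpl in *; congruence.
  - destruct IH as [c Hc]. exists c. rewrite Hc. apply set_ext; auto.
Qed.

Fixpoint benc (c : bcode) (p : list nat) : nat :=
  match c, p with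
  | BOpen s, nil => 1%nat
  | BOpen s, n :: _ => if s n then 1%nat else 0%nat
  | BCompl c, nil => 2%nat
  | BCompl c, _ :: p => benc c p
  | BUnion f, nil => 3%nat
  | BUnion f, n :: p => benc (f n) p
  end.

Lemma benc_inj : forall c d, (forall p, benc c p = benc d p) -> c = d.
Proof.
  induction c as [s|c IH|f IH]; destruct d as [s'|d|f']; intros H;
    try (specialize (H nil); simpl in H; discriminate).
  - f_equal. apply functional_extensionality; intro n. specialize (H (n :: nil)). simpl in H.
    destruct (s n), (s' n); auto; discriminate.
  - f_equal. apply IH. intro p. exact (H (0%nat :: p)).
  - f_equal. apply functional_extensionality; intro n. apply IH. intro p. exact (H (n :: p)).
Qed.

Definition dl : nat -> list nat :=
  proj1_sig (constructive_indefinite_description _ (left_inv _ _ (lcode (fun n => n)) nil)).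
Lemma dl_spec : forall l, dl (lcode (fun n => n) l) = l.
Proof.
  intros l. unfold dl. destruct (constructive_indefinite_description _ _) as [g Hg]; simpl.
  apply Hg. apply lcode_inj; auto.
Qed.

Definition bc (c : bcode) : CS := fun m =>
  let (a, b) := Cantor.of_nat m in Nat.eqb (benc c (dl a)) b.

Lemma bc_inj : forall c d, bc c = bc d -> c = d.
Proof.
  intros c d H. apply benc_inj. intro p.
  set (m := Cantor.to_nat (lcode (fun n => n) p, benc c p)).
  assert (E := f_equal (fun h => h m) H). cbv beta in E. unfold bc, m in E.
  rewrite Cantor.cancel_of_to, dl_spec, Nat.eqb_refl in E.
  symmetry in E. apply Nat.eqb_eq in E. auto.
Qed.

Definition interleave (a t : CS) : CS := fun n => if Nat.even n then a (Nat.div2 n) else t (Nat.div2 n).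
Definition splitC (s : CS) : CS := fun n => s (2 * n)%nat.
Lemma split_inter a t : splitC (interleave a t) = a.
Proof.
  apply functional_extensionality; intro n. unfold splitC, interleave.
  rewrite Nat.even_even, Nat.div2_double. auto.
Qed.
Lemma inter_inj a t t' : interleave a t = interleave a t' -> t = t'.
Proof.
  intros H. apply functional_extensionality; intro n.
  assert (E := f_equal (fun h => h (S (2 * n))) H). cbv beta in E. unfold interleave in E.
  rewrite Nat.even_succ, Nat.odd_mul, Nat.div2_succ_double in E. simpl in E. auto.
Qed.

Lemma code_fibers : exists k : R -> bcode, forall c (E : Type) (j : R -> E) (s : E -> R),
  (forall r, s (j r) = r) ->
  ~ exists g : E -> nat, forall a b, k (s a) = c -> k (s b) = c -> g a = g b -> a = b.
Proof.
  destruct (left_inv _ _ vC (fun _ => true)) as [phi Hphi].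
  destruct (left_inv _ _ bc (BOpen (fun _ => true))) as [dec Hdec].
  exists (fun r => dec (splitC (phi r))).
  intros c E j s Hjs [g Hg]. apply C_uncount.
  exists (fun t => g (j (vC (interleave (bc c) t)))).
  intros t t' Heq.
  assert (F : forall t, dec (splitC (phi (s (j (vC (interleave (bc c) t)))))) = c).
  { intro u. rewrite Hjs, Hphi by apply vC_inj. rewrite split_inter. apply Hdec, bc_inj. }
  apply (Hg _ _ (F t) (F t')) in Heq.
  apply (f_equal s) in Heq. rewrite !Hjs in Heq. apply vC_inj in Heq.
  eapply inter_inj; eauto.
Qed.

Lemma borel_shift : forall A, borel A -> forall c, borel (fun x => A (x + c)).
Proof.
  induction 1 as [A HA|A HA IH|F HF IH|A B HA IH HAB]; intro c.
  - apply borel_open. intros x Hx. destruct (HA _ Hx) as [eps [He Hb]].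
    exists eps; split; auto. intros y Hy. apply Hb.
    replace (y + c - (x + c)) with (y - x) by ring. auto.
  - apply borel_compl. auto.
  - apply borel_cunion. auto.
  - eapply borel_ext; [apply IH|]. intro x; apply HAB.
Qed.

Definition qe : nat -> Q :=
  proj1_sig (constructive_indefinite_description _ (left_inv _ _ qcode 0%Q)).
Lemma qe_surj : forall q, qe (qcode q) = q.
Proof.
  intros q. unfold qe. destruct (constructive_indefinite_description _ _) as [g Hg]; simpl.
  apply Hg, qcode_inj.
Qed.

Lemma Q2R_0 : Q2R 0 = 0.
Proof. unfold Q2R; simpl; ring. Qed.
Lemma Q2R_1 : Q2R 1 = 1.
Proof. unfold Q2R; simpl. rewrite Rinv_1; ring. Qed.

Definition QI (B : set) : set := fun z => exists q : Q, B (z + Q2R q).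

Lemma QI_borel B : borel B -> borel (QI B).
Proof.
  intros HB. eapply borel_ext.
  - apply (borel_cunion (fun n => fun z => B (z + Q2R (qe n)))). intro n. apply borel_shift; auto.
  - intro x; split; [intros [n Hn]; exists (qe n); auto|intros [q Hq]; exists (qcode q); rewrite qe_surj; auto].
Qed.

Section Anal.
Variable I : set -> Prop.
Hypothesis HI : standing_assumptions I.

Lemma hull_null B : borel B -> ~ I B -> I (fun z => ~ QI B z).
Proof.
  intros HB nB. destruct HI as [[I0 [Isub Iun]] [nfull [Itr [Isc [Ihull Istein]]]]].
  apply NNPP; intro nN.
  assert (nE : ~ I (QI B)).
  { intro H. apply nB. apply (Isub _ _ H). intros x Bx. exists 0%Q. rewrite Q2R_0, Rplus_0_r; auto. }
  destruct (Istein (QI B) (fun z => ~ QI B z) (QI_borel B HB) (borel_compl _ (QI_borel B HB)) nE nN)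
    as [x [eps [He Hb]]].
  destruct (Q_dense_up x eps He) as [r Hr].
  destruct (Hb (Q2R r)) as [a [b [[q Ha] [Nb E]]]]. { apply Rabs_def1; lra. }
  apply Nb. exists (r + q)%Q. rewrite Q2R_plus.
  replace (b + (Q2R r + Q2R q)) with (a + Q2R q) by lra. auto.
Qed.

Definition LQ (L : set) : set := fun y => exists l q, L l /\ y = l + Q2R q.

Lemma LQ_luzin L : (forall A, I A -> countable (fun x => L x /\ A x)) ->
  forall A, I A -> countable (fun y => LQ L y /\ A y).
Proof.
  intros Luz A HA. destruct HI as [[I0 [Isub Iun]] [nfull [Itr [Isc [Ihull Istein]]]]].
  assert (cq : forall q : Q, {c : R -> nat | forall x y,
     (L x /\ translate (- Q2R q) A x) -> (L y /\ translate (- Q2R q) A y) -> c x = c y -> x = y}).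
  { intro q. apply constructive_indefinite_description. apply Luz. apply Itr. auto. }
  assert (pk : forall y, {p : R * Q | LQ L y -> L (fst p) /\ y = fst p + Q2R (snd p)}).
  { intro y. destruct (excluded_middle_informative (LQ L y)) as [H|H].
    - apply constructive_indefinite_description in H. destruct H as [l H].
      apply constructive_indefinite_description in H. destruct H as [q H].
      exists (l, q); simpl; auto.
    - exists (0, 0%Q); intro; contradiction. }
  exists (fun y => let p := proj1_sig (pk y) in Cantor.to_nat (qcode (snd p), proj1_sig (cq (snd p)) (fst p))).
  intros y1 y2 [L1 A1] [L2 A2] H. cbv zeta in H.
  destruct (pk y1) as [[l1 q1] P1]; destruct (pk y2) as [[l2 q2] P2]; cbn [fst snd proj1_sig] in *.
  destruct (P1 L1) as [Hl1 E1]; destruct (P2 L2) as [Hl2 E2].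
  apply (f_equal Cantor.of_nat) in H. rewrite !Cantor.cancel_of_to in H.
  inversion H as [[Hq Hc]]. apply qcode_inj in Hq. subst q2.
  destruct (cq q1) as [c Hc']; simpl in Hc.
  assert (l1 = l2).
  { apply Hc'; auto; split; auto.
    - exists y1; split; auto. lra.
    - exists y2; split; auto. lra. }
  subst; auto.
Qed.
End Anal.

From mathcomp Require ssreflect ssrfun ssrbool eqtype boolp wochoice.
Module WO.
Import ssreflect ssrfun ssrbool eqtype boolp wochoice.
Lemma wo_exists (T : Type) : exists lt : T -> T -> Prop,
  well_founded lt /\ (forall a b c, lt a b -> lt b c -> lt a c) /\
  (forall a b, lt a b \/ a = b \/ lt b a).
Proof.
have [R wR] := well_ordering_principle (classicType T).
have mn : forall P : classicType T -> Prop, (exists x, P x) ->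
   exists z, P z /\ forall x, P x -> R z x.
  move=> P [x Px].
  have [|z [[zin zlb] _]] := wR [pred x | `[< P x >]].
    by exists x; rewrite inE; apply/asboolP.
  exists z; split; first by move: zin; rewrite inE => /asboolP.
  by move=> y Py; apply: zlb; rewrite inE; apply/asboolP.
have min2 : forall a b : classicType T, R a b \/ R b a.
  move=> a b; have [|z [zin zlb]] := mn (fun x => x = a \/ x = b); first by exists a; left.
  by case: zin => e; subst z; [left|right]; apply: zlb; [right|left].
have refl : forall a : classicType T, R a a.
  by move=> a; case: (min2 a a).
have anti : forall a b : classicType T, R a b -> R b a -> a = b.
  move=> a b ab ba.
  have [|z [[zin zlb] zu]] := wR (pred2 a b); first by exists a; rewrite inE eqxx.
  have ea : z = a.
    apply: zu; split; first by rewrite inE eqxx.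
    by move=> x; rewrite inE => /orP[/eqP->|/eqP->].
  have eb : z = b.
    apply: zu; split; first by rewrite inE eqxx orbT.
    by move=> x; rewrite inE => /orP[/eqP->|/eqP->].
  by rewrite -ea -eb.
have trans : forall a b c : classicType T, R a b -> R b c -> R a c.
  move=> a b c ab bc.
  have [|z [zin zlb]] := mn (fun x => x = a \/ x = b \/ x = c); first by exists a; left.
  case: zin => [e|[e|e]]; subst z.
  - by apply: zlb; right; right.
  - have e2 : b = a by apply: anti => //; apply: zlb; left.
    by subst b.
  - have e1 : c = b by apply: anti => //; apply: zlb; right; left.
    subst c. have e2 : b = a by apply: anti => //; apply: zlb; left.
    by subst b.
exists (fun a b => R a b /\ a <> b); split; [|split].
- move=> x0. apply: Classical_Prop.NNPP => nacc.
  have [|z [nz zlb]] := mn (fun x => ~ Acc (fun a b => R a b /\ a <> b) x).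
    by exists x0.
  apply: nz; constructor => y [yz ne]; apply: Classical_Prop.NNPP => ny.
  by apply: ne; apply: anti => //; apply: zlb.
- move=> a b c [ab nab] [bc nbc]; split; first exact: trans ab bc.
  move=> eac; subst c; apply: nab; exact: anti.
- move=> a b; case: (min2 a b) => h.
  + case: (pselect (a = b)) => e; [by right; left|by left].
  + case: (pselect (a = b)) => e; [by right; left|by right; right; split=> // e'; apply: e].
Qed.
End WO.

Global Set Bullet Behavior "Strict Subproofs".
Global Unset Asymmetric Patterns.

Lemma wf_min (E : Type) (lt : E -> E -> Prop) : well_founded lt ->
  forall P : E -> Prop, (exists x, P x) -> exists x, P x /\ forall y, lt y x -> ~ P y.
Proof.
  intros wf P [x Px]. revert Px. induction x as [x IH] using (well_founded_induction wf).
  intros Px. destruct (classic (exists y, lt y x /\ P y)) as [[y [Hy Py]]|H].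
  - apply (IH y Hy Py).
  - exists x; split; auto. intros y Hy Py; apply H; eauto.
Qed.

Definition item_map {A B} (f : A -> B) (it : (A + nat) * Q) : (B + nat) * Q :=
  match it with (inl a, q) => (inl (f a), q) | (inr n, q) => (inr n, q) end.

Lemma map_inj_on {X Y} (f : X -> Y) (P : X -> Prop) :
  (forall a b, P a -> P b -> f a = f b -> a = b) ->
  forall l1 l2, Forall P l1 -> Forall P l2 -> map f l1 = map f l2 -> l1 = l2.
Proof.
  intros Hf l1; induction l1; destruct l2; simpl; intros H1 H2 H; try discriminate; auto.
  inversion H; inversion H1; inversion H2; subst. f_equal; auto.
Qed.

Lemma Fset_map A B : inj A B -> inj (Fset A) (Fset B).
Proof.
  intros [f Hf]. exists (map (item_map f)).
  intros l1 l2. apply (map_inj_on _ (fun _ => True)); try (apply Forall_forall; auto).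
  intros [[a|n] q] [[b|m] q'] _ _ H; simpl in H; inversion H; subst; auto.
  rewrite (Hf _ _ H1); auto.
Qed.

Lemma sig_eq {A} {P : A -> Prop} (x y : {a | P a}) : proj1_sig x = proj1_sig y -> x = y.
Proof. destruct x, y; simpl; intros; subst. f_equal. apply proof_irrelevance. Qed.

Section Econ.
Variables (W : Type) (ltW : W -> W -> Prop).
Hypotheses (wfW : well_founded ltW) (trW : forall a b c, ltW a b -> ltW b c -> ltW a c)
  (totW : forall a b, ltW a b \/ a = b \/ ltW b a).

Definition Dg (w : W) : Prop := ~ inj R (Fset {v | ltW v w}).
Definition DT := {w | Dg w}.
Definition Ety := Fset DT.

Definition ltO (o1 o2 : option DT) : Prop :=
  match o1, o2 with
  | None, Some _ => True
  | Some a, Some b => ltW (proj1_sig a) (proj1_sig b)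
  | _, _ => False end.
Definition leO o1 o2 := ltO o1 o2 \/ o1 = o2.

Definition maxo (o1 o2 : option DT) : option DT :=
  match o1, o2 with
  | None, o => o
  | o, None => o
  | Some a, Some b => if excluded_middle_informative (ltW (proj1_sig a) (proj1_sig b))
                      then Some b else Some a end.

Fixpoint mx (l : Ety) : option DT :=
  match l with
  | nil => None
  | (inl d, _) :: l => maxo (Some d) (mx l)
  | (inr _, _) :: l => mx l end.

Lemma irrW a : ~ ltW a a.
Proof.
  intro H. induction (wfW a) as [a _ IH]. apply (IH a H H).
Qed.

Lemma leO_trans a b c : leO a b -> leO b c -> leO a c.
Proof.
  unfold leO; destruct a as [a|], b as [b|], c as [c|]; simpl; intros [H|H] [H'|H'];
    try discriminate; try contradiction; try (inversion H; subst); try (inversion H'; subst); eauto.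
Qed.

Lemma maxo_ge_l a b : leO a (maxo a b).
Proof.
  unfold leO; destruct a as [a|], b as [b|]; simpl; auto.
  destruct (excluded_middle_informative _); auto.
Qed.
Lemma maxo_ge_r a b : leO b (maxo a b).
Proof.
  unfold leO; destruct a as [a|], b as [b|]; simpl; auto.
  destruct (excluded_middle_informative _) as [H|H]; auto.
  destruct (totW (proj1_sig a) (proj1_sig b)) as [H1|[H1|H1]]; try contradiction; auto.
  right; f_equal; apply sig_eq; auto.
Qed.

Lemma mx_ge : forall l d q, In (inl d, q) l -> leO (Some d) (mx l).
Proof.
  induction l as [|[[e|n] q'] l IH]; cbn [mx In]; intros d q H; try contradiction.
  - destruct H as [H|H].
    + inversion H; subst. apply maxo_ge_l.
    + eapply leO_trans; [eapply IH; eauto|apply maxo_ge_r].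
  - destruct H as [H|H]; [discriminate|eauto].
Qed.

Lemma ltO_wf : well_founded ltO.
Proof.
  assert (HS : forall w, forall a : DT, proj1_sig a = w -> Acc ltO (Some a)).
  { intro w. induction w as [w IH] using (well_founded_induction wfW).
    intros a Ha. constructor. intros [b|] Hb; simpl in Hb.
    - apply (IH (proj1_sig b)); auto. congruence.
    - constructor. intros [c|] Hc; simpl in Hc; contradiction. }
  intros [a|]. eapply HS; eauto. constructor. intros [c|] Hc; simpl in Hc; contradiction.
Qed.

Variables (ltZ : Ety -> Ety -> Prop).
Hypotheses (wfZ : well_founded ltZ) (trZ : forall a b c, ltZ a b -> ltZ b c -> ltZ a c)
  (totZ : forall a b, ltZ a b \/ a = b \/ ltZ b a).

Definition ltE (l l' : Ety) : Prop := ltO (mx l) (mx l') \/ (mx l = mx l' /\ ltZ l l').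

Lemma ltE_wf : well_founded ltE.
Proof.
  assert (H : forall o, forall l, mx l = o -> Acc ltE l).
  { intro o. induction o as [o IH] using (well_founded_induction ltO_wf).
    intros l Hl. subst o. induction l as [l IHl] using (well_founded_induction wfZ).
    constructor. intros l' Hl'. destruct Hl' as [H0|[H1 H2]].
    { eapply IH; eauto. }
    { apply IHl; [exact H2|]. intros y Hy; apply IH; congruence. } }
  intro l; eapply H; eauto.
Qed.

Lemma ltO_trans a b c : ltO a b -> ltO b c -> ltO a c.
Proof. destruct a as [a|], b as [b|], c as [c|]; simpl; eauto; intros; contradiction. Qed.

Lemma ltE_trans a b c : ltE a b -> ltE b c -> ltE a c.
Proof.
  unfold ltE; intros [H|[H1 H2]] [H'|[H1' H2']].
  - left; eapply ltO_trans; eauto.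
  - left; congruence.
  - left; congruence.
  - right; split; [congruence|eauto].
Qed.

Lemma ltO_tot a b : ltO a b \/ a = b \/ ltO b a.
Proof.
  destruct a as [a|], b as [b|]; simpl; auto.
  destruct (totW (proj1_sig a) (proj1_sig b)) as [H|[H|H]]; auto.
  right; left; f_equal; apply sig_eq; auto.
Qed.

Lemma ltE_tot a b : ltE a b \/ a = b \/ ltE b a.
Proof.
  unfold ltE. destruct (ltO_tot (mx a) (mx b)) as [H|[H|H]]; auto.
  destruct (totZ a b) as [H'|[H'|H']]; auto.
Qed.

Lemma ltO_leO a b : ltO a b -> leO a b.
Proof. unfold leO; auto. Qed.

Lemma ltE_le a b : ltE a b -> leO (mx a) (mx b).
Proof. intros [H|[H _]]; unfold leO; auto. Qed.

Lemma leO_None o : leO o None -> o = None.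
Proof. unfold leO; destruct o; simpl; intuition. Qed.

Lemma seg_good (b : Ety) : ~ inj R (Fset {l | ltE l b}).
Proof.
  intros HR. destruct (mx b) as [g|] eqn:Hb.
  - set (fi := fun it : DT + nat => match it with
       | inl d => match excluded_middle_informative (ltW (proj1_sig d) (proj1_sig g)) with
                  | left p => inl (exist (fun v => ltW v (proj1_sig g)) (proj1_sig d) p)
                  | right _ => inr 0%nat end
       | inr n => inr (S n) end).
    set (P := fun it : (DT + nat) * Q => match fst it with
       | inl d => ~ ltW (proj1_sig g) (proj1_sig d) | inr _ => True end).
    set (fl := map (fun it : (DT + nat) * Q => (fi (fst it), snd it))).
    assert (Pinj : forall a c, P a -> P c -> (fi (fst a), snd a) = (fi (fst c), snd c) -> a = c).
    { intros [[d|n] q] [[e|m] q'] Pa Pc H; unfold P in Pa, Pc; cbn [fst snd] in *;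
        unfold fi in H; inversion H; subst; auto.
      - destruct (excluded_middle_informative (ltW (proj1_sig d) (proj1_sig g))) as [p1|p1];
        destruct (excluded_middle_informative (ltW (proj1_sig e) (proj1_sig g))) as [p2|p2];
        inversion H1; auto.
        + f_equal; f_equal. apply sig_eq; auto.
        + assert (d = g). { destruct (totW (proj1_sig d) (proj1_sig g)) as [X|[X|X]];
            try contradiction. apply sig_eq; auto. }
          assert (e = g). { destruct (totW (proj1_sig e) (proj1_sig g)) as [X|[X|X]];
            try contradiction. apply sig_eq; auto. }
          subst; auto.
      - destruct (excluded_middle_informative (ltW (proj1_sig d) (proj1_sig g))); discriminate.
      - destruct (excluded_middle_informative (ltW (proj1_sig e) (proj1_sig g))); discriminate. }
    assert (segP : forall l, ltE l b -> Forall P l).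
    { intros l Hl. apply Forall_forall. intros [[d|n] q] Hin; unfold P; cbn [fst]; auto.
      assert (A1 := mx_ge l d q Hin). assert (A2 := ltE_le l b Hl). rewrite Hb in A2.
      assert (A3 := leO_trans _ _ _ A1 A2). intro X.
      destruct A3 as [A3|A3]; simpl in A3.
      - apply (irrW (proj1_sig g)); eauto.
      - inversion A3; subst. apply (irrW _ X). }
    apply (proj2_sig g). eapply inj_trans; [exact HR|]. apply Fset_flat.
    exists (fun l => fl (proj1_sig l)). intros [l1 H1] [l2 H2] E. apply sig_eq; simpl.
    apply (map_inj_on _ P Pinj); auto.
  - apply R_uncount. eapply inj_trans; [exact HR|].
    eapply inj_trans; [|exact Fset_empty_count]. apply Fset_flat.
    set (fi := fun it : DT + nat => match it with
       | inl d => @inr Empty_set nat 0%nat | inr n => inr n end).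
    set (P := fun it : (DT + nat) * Q => match fst it with
       | inl d => False | inr _ => True end).
    exists (fun l => map (fun it : (DT + nat) * Q => (fi (fst it), snd it)) (proj1_sig l)).
    intros [l1 H1] [l2 H2] E. apply sig_eq; simpl. simpl in E.
    assert (segP : forall l, ltE l b -> Forall P l).
    { intros l Hl. apply Forall_forall. intros [[d|n] q] Hin; unfold P; cbn [fst]; auto.
      assert (A1 := mx_ge l d q Hin). assert (A2 := ltE_le l b Hl). rewrite Hb in A2.
      assert (A3 := leO_trans _ _ _ A1 A2). apply leO_None in A3. discriminate. }
    apply (map_inj_on (fun it : (DT + nat) * Q => (fi (fst it), snd it)) P); auto.
    intros [[d|n] q] [[e|m] q'] Pa Pc H; unfold P in Pa, Pc; cbn [fst] in *; try contradiction.
    inversion H; subst; auto.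
Qed.

Lemma R_into_E : inj R W -> inj R Ety.
Proof.
  intros [f Hf]. destruct (classic (forall w, Dg w)) as [all|nall].
  - exists (fun r => (inl (exist Dg (f r) (all (f r))), 0%Q) :: nil).
    intros x y H. inversion H. apply Hf; auto.
  - destruct (wf_min _ _ wfW (fun w => ~ Dg w)) as [b0 [Hb0 Hmin]].
    { apply NNPP; intro X; apply nall; intro w; apply NNPP; intro Y; apply X; eauto. }
    apply NNPP in Hb0. eapply inj_trans; [exact Hb0|]. apply Fset_map.
    exists (fun v : {v | ltW v b0} => exist Dg (proj1_sig v)
      (NNPP _ (Hmin (proj1_sig v) (proj2_sig v)))).
    intros x y H. apply sig_eq. apply (f_equal (@proj1_sig _ _)) in H. auto.
Qed.
End Econ.

Theorem E_exists : exists (E : Type) (lt : E -> E -> Prop) (j : R -> E),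
  well_founded lt /\ (forall a b c, lt a b -> lt b c -> lt a c) /\
  (forall a b, lt a b \/ a = b \/ lt b a) /\
  (forall x y, j x = j y -> x = y) /\ (forall b, ~ inj R (Fset {g : E | lt g b})).
Proof.
  destruct (WO.wo_exists R) as [ltW [wfW [trW totW]]].
  destruct (WO.wo_exists (Ety R ltW)) as [ltZ [wfZ [trZ totZ]]].
  destruct (R_into_E R ltW wfW) as [j Hj]. { exists (fun r => r); auto. }
  exists (Ety R ltW), (ltE R ltW ltZ), j.
  split; [apply ltE_wf; auto|]. split; [apply ltE_trans; auto|].
  split; [apply ltE_tot; auto|]. split; auto.
  apply seg_good; auto.
Qed.

Section Rec.
Variable I : set -> Prop.
Hypothesis HI : standing_assumptions I.
Variable L : set.
Variable fL : R -> R.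
Hypotheses (fLin : forall r, L (fL r)) (fLinj : forall a b, fL a = fL b -> a = b).
Hypothesis Luz : forall A, I A -> countable (fun x => L x /\ A x).
Variables (E : Type) (lt : E -> E -> Prop) (j : R -> E) (s : E -> R) (k : R -> bcode).
Hypotheses (wf : well_founded lt) (tr : forall a b c, lt a b -> lt b c -> lt a c)
  (tot : forall a b, lt a b \/ a = b \/ lt b a)
  (good : forall b, ~ inj R (Fset {g : E | lt g b})).

Definition tgt (b : E) : set :=
  if excluded_middle_informative (borel (decode (k (s b))) /\ ~ I (decode (k (s b))))
  then decode (k (s b)) else full.

Lemma tgt_ok b : borel (tgt b) /\ ~ I (tgt b).
Proof.
  unfold tgt. destruct (excluded_middle_informative _) as [H|H]; auto.
  destruct HI as [_ [nfull _]]. split; auto.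
  apply borel_open. intros x _. exists 1; split; [lra|]. intros; constructor.
Qed.

Definition spanI (b : E) (rec : forall g, lt g b -> R) (y : R) : Prop :=
  exists l : list (Q * {g | lt g b}),
    y = fold_right (fun p acc => Q2R (fst p) * rec (proj1_sig (snd p)) (proj2_sig (snd p)) + acc) 0 l.

Definition Fstep (b : E) (rec : forall g, lt g b -> R) : R :=
  match excluded_middle_informative (exists y, LQ L y /\ tgt b y /\ ~ spanI b rec y) with
  | left H => proj1_sig (constructive_indefinite_description _ H)
  | right _ => 0 end.

Definition x : E -> R := Fix wf (fun _ => R) Fstep.

Lemma x_eq b : x b = Fstep b (fun g _ => x g).
Proof.
  unfold x. refine (Fix_eq wf (fun _ => R) Fstep _ b). intros b' f g H.
  assert (f = g) by (apply functional_extensionality_dep; intro y;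
                     apply functional_extensionality_dep; intro p; auto).
  subst; auto.
Qed.

Definition spanX (b : E) (y : R) : Prop :=
  exists l : list (Q * {g | lt g b}),
    y = fold_right (fun p acc => Q2R (fst p) * x (proj1_sig (snd p)) + acc) 0 l.

Definition evi (b : E) (it : ({g | lt g b} + nat) * Q) : R :=
  match it with
  | (inl g, q) => Q2R q * x (proj1_sig g)
  | (inr O, q) => Q2R q
  | (inr (S _), _) => 0 end.
Definition evl (b : E) (l : Fset {g | lt g b}) : R := fold_right (fun it acc => evi b it + acc) 0 l.

Lemma evl_app b l1 l2 : evl b (l1 ++ l2) = evl b l1 + evl b l2.
Proof. induction l1; simpl; [ring|]. unfold evl in *. simpl. rewrite IHl1. ring. Qed.

Lemma evl_map b (lst : list (Q * {g | lt g b})) :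
  evl b (map (fun p => (inl (snd p), fst p)) lst) =
  fold_right (fun p acc => Q2R (fst p) * x (proj1_sig (snd p)) + acc) 0 lst.
Proof. induction lst; simpl; auto. unfold evl in *; simpl. rewrite IHlst. auto. Qed.

Lemma stage b : exists y, LQ L y /\ tgt b y /\ ~ spanX b y.
Proof.
  destruct (tgt_ok b) as [hB nIB]. set (B := tgt b) in *.
  assert (HN := hull_null I HI B hB nIB).
  destruct (Luz _ HN) as [cN HcN].
  apply NNPP; intro H.
  assert (Hsp : forall y, LQ L y -> B y -> spanX b y).
  { intros y H1 H2. apply NNPP; intro H3. apply H; eauto. }
  apply (good b).
  assert (rep : forall r, {l : Fset {g | lt g b} |
     (evl b l = fL r /\ exists lst q, l = map (fun p => (inl (snd p), fst p)) lst ++ (inr 0%nat, q) :: nil)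
     \/ (~ QI B (fL r) /\ l = (inr (S (cN (fL r))), 1%Q) :: nil)}).
  { intro r. apply constructive_indefinite_description.
    destruct (classic (QI B (fL r))) as [[q Hq]|Hq].
    - destruct (Hsp (fL r + Q2R q)) as [lst Hl]. { exists (fL r), q; auto. } { auto. }
      exists (map (fun p => (inl (snd p), fst p)) lst ++ (inr 0%nat, (- q)%Q) :: nil).
      left. split; [|eauto]. rewrite evl_app, evl_map, <- Hl. unfold evl; simpl.
      rewrite Q2R_opp. ring.
    - exists ((inr (S (cN (fL r))), 1%Q) :: nil). right; auto. }
  exists (fun r => proj1_sig (rep r)). intros r1 r2 Heq.
  destruct (rep r1) as [l1 [[E1 [lst1 [q1 D1]]]|[N1 D1]]];
  destruct (rep r2) as [l2 [[E2 [lst2 [q2 D2]]]|[N2 D2]]]; simpl in Heq; subst l1 l2.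
  - apply fLinj. rewrite <- E1, <- E2, Heq. auto.
  - apply app_eq_unit in Heq. destruct Heq as [[_ X]|[_ X]]; discriminate.
  - symmetry in Heq. apply app_eq_unit in Heq. destruct Heq as [[_ X]|[_ X]]; discriminate.
  - inversion Heq. apply fLinj. apply HcN; auto.
Qed.

Lemma x_prop b : LQ L (x b) /\ tgt b (x b) /\ ~ spanX b (x b).
Proof.
  rewrite x_eq. unfold Fstep.
  destruct (excluded_middle_informative _) as [H|H].
  - destruct (constructive_indefinite_description _ H) as [y Hy]. simpl. exact Hy.
  - exfalso. apply H. apply stage.
Qed.

Lemma x_inj a b : x a = x b -> a = b.
Proof.
  intros H. destruct (tot a b) as [h|[h|h]]; auto; exfalso.
  - apply (proj2 (proj2 (x_prop b))). exists ((1%Q, exist _ a h) :: nil). simpl.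
    rewrite Q2R_1, H. ring.
  - apply (proj2 (proj2 (x_prop a))). exists ((1%Q, exist _ b h) :: nil). simpl.
    rewrite Q2R_1, H. ring.
Qed.


Definition sumQR (l : list (Q * R)) : R := fold_right (fun p s => Q2R (fst p) * snd p + s) 0 l.

Lemma sumQR_app l1 l2 : sumQR (l1 ++ l2) = sumQR l1 + sumQR l2.
Proof. induction l1; simpl; [ring|]. unfold sumQR in *; simpl. rewrite IHl1. ring. Qed.

Lemma list_max {A} (m : A -> E) (l : list A) : l <> nil ->
  exists a, In a l /\ forall b, In b l -> lt (m b) (m a) \/ m b = m a.
Proof.
  induction l as [|a l IH]; intros H; [congruence|].
  destruct l as [|a' l].
  - exists a; split; [left; auto|]. intros b [Hb|[]]; subst; auto.
  - destruct IH as [c [Hc Hmax]]; [discriminate|].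
    destruct (tot (m a) (m c)) as [h|[h|h]].
    + exists c; split; [right; auto|]. intros b [Hb|Hb]; subst; auto.
    + exists c; split; [right; auto|]. intros b [Hb|Hb]; subst; auto.
    + exists a; split; [left; auto|]. intros b [Hb|Hb]; subst; auto.
      destruct (Hmax b Hb) as [h'|h']; left; [eauto|congruence].
Qed.

Lemma span_build b0 c (rest : list (Q * R)) :
  (forall p, In p rest -> exists g, lt g b0 /\ x g = snd p) -> spanX b0 (Q2R c * sumQR rest).
Proof.
  induction rest as [|p rest IH]; intros H.
  - exists nil. simpl. ring.
  - destruct (H p (or_introl eq_refl)) as [g [hg xg]].
    destruct IH as [lst Hl]. { intros p' Hp'; apply H; right; auto. }
    exists (((c * fst p)%Q, exist _ g hg) :: lst). simpl. rewrite <- Hl, Q2R_mult, xg.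
    unfold sumQR; simpl. ring.
Qed.

Definition idx (y : R) : E :=
  match excluded_middle_informative (exists b, x b = y) with
  | left H => proj1_sig (constructive_indefinite_description _ H)
  | right _ => j 0 end.
Lemma idx_spec y : (exists b, x b = y) -> x (idx y) = y.
Proof.
  intros H. unfold idx. destruct (excluded_middle_informative _) as [H'|H']; [|contradiction].
  destruct (constructive_indefinite_description _ H'); auto.
Qed.

Lemma indep : forall n (l : list (Q * R)), (length l <= n)%nat -> NoDup (map snd l) ->
  Forall (fun p => exists b, x b = snd p) l -> sumQR l = 0 -> Forall (fun p => Qeq (fst p) 0) l.
Proof.
  induction n as [|n IH]; intros l Hlen Hnd Hx Hs.
  - destruct l; simpl in Hlen; [constructor|lia].
  - destruct l as [|p l'] eqn:El; [constructor|]. rewrite <- El in *.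
    destruct (list_max (fun p => idx (snd p)) l) as [p0 [Hp0 Hmax]]. { rewrite El; discriminate. }
    destruct (in_split _ _ Hp0) as [l1 [l2 Hsp]].
    assert (Hx0 := proj1 (Forall_forall _ _) Hx p0 Hp0). apply idx_spec in Hx0.
    set (b0 := idx (snd p0)) in *.
    set (rest := l1 ++ l2).
    assert (Hsum : sumQR rest = - (Q2R (fst p0) * snd p0)).
    { unfold rest. rewrite sumQR_app. rewrite Hsp, sumQR_app in Hs. unfold sumQR in Hs |- *.
      simpl in Hs. lra. }
    assert (Hnd' : NoDup (map snd l1 ++ snd p0 :: map snd l2)).
    { replace (map snd l1 ++ snd p0 :: map snd l2) with (map snd l) by (rewrite Hsp, map_app; reflexivity). auto. }
    assert (Hrest : forall p, In p rest -> exists g, lt g b0 /\ x g = snd p).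
    { intros p' Hp'. assert (Inl : In p' l) by (rewrite Hsp; apply in_app_or in Hp';
        apply in_or_app; destruct Hp'; [left|right; right]; auto).
      assert (Hx' := proj1 (Forall_forall _ _) Hx p' Inl). apply idx_spec in Hx'.
      exists (idx (snd p')). split; auto.
      destruct (Hmax p' Inl) as [h|h]; auto. exfalso.
      apply (NoDup_remove_2 _ _ _ Hnd'). rewrite <- map_app.
      replace (snd p0) with (snd p') by (rewrite <- Hx', <- Hx0; simpl in h; fold b0 in h; congruence).
      apply in_map; auto. }
    destruct (classic (Qeq (fst p0) 0)) as [Hq|Hq].
    + assert (HR0 : Q2R (fst p0) = 0) by (rewrite <- Q2R_0; apply Qeq_eqR; auto).
      assert (Fr : Forall (fun p => Qeq (fst p) 0) rest).
      { apply IH.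
        - unfold rest. rewrite Hsp in Hlen. rewrite length_app in *. simpl in Hlen. lia.
        - unfold rest. rewrite map_app. eapply NoDup_remove_1; eauto.
        - apply Forall_forall; intros p' Hp'. apply (proj1 (Forall_forall _ _) Hx).
          rewrite Hsp; apply in_app_or in Hp'; apply in_or_app; destruct Hp'; [left|right; right]; auto.
        - rewrite Hsum, HR0. ring. }
      apply Forall_forall; intros p' Hp'. rewrite Hsp in Hp'.
      apply in_app_or in Hp'. destruct Hp' as [Hp'|[Hp'|Hp']].
      * apply (proj1 (Forall_forall _ _) Fr). apply in_or_app; auto.
      * subst; auto.
      * apply (proj1 (Forall_forall _ _) Fr). apply in_or_app; auto.
    + exfalso. assert (HR0 : Q2R (fst p0) <> 0).
      { intro h. apply Hq. apply eqR_Qeq. rewrite Q2R_0; auto. }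
      apply (proj2 (proj2 (x_prop b0))).
      replace (x b0) with (Q2R (- / fst p0) * sumQR rest).
      * apply span_build; auto.
      * rewrite Q2R_opp, Q2R_inv by auto. rewrite Hsum, Hx0. field; auto.
Qed.

End Rec.

Theorem mainTheorem12 (I : set -> Prop) :
  standing_assumptions I ->
  (exists L, I_Luzin I L) ->
  exists L, strong_I_Luzin I L /\ lin_indep_Q L.
Proof.
  intros HI [L [[fL [fLin [fLinj _]]] Luz]].
  destruct E_exists as [E [lt [j [wf [tr [tot [jinj good]]]]]]].
  destruct code_fibers as [k Hk].
  destruct (left_inv _ _ j 0) as [s Hs].
  assert (Hsj : forall r, s (j r) = r) by (intro r; apply Hs; auto).
  set (xx := x I L E lt s k wf) in *.
  assert (Xp := x_prop I HI L fL fLin fLinj Luz E lt s k wf good).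
  assert (Xi := x_inj I HI L fL fLin fLinj Luz E lt s k wf tot good).
  exists (fun y => exists r, y = xx (j r)). split; [split; [split|]|].
  - exists (fun r => xx (j r)). split; [eauto|]. split.
    + intros a b H. apply jinj, Xi. auto.
    + intros y [r Hr]; eauto.
  - intros A HA. destruct (LQ_luzin I HI L Luz A HA) as [c Hc].
    exists c. intros a b [[ra Ha] Aa] [[rb Hb] Ab] H. apply Hc; auto; split; auto.
    + subst. apply Xp.
    + subst. apply Xp.
  - intros B hB nB [g Hg]. destruct (borel_code B hB) as [c Hc].
    apply (Hk c R (fun r => r) (fun r => r) (fun r => eq_refl)).
    exists (fun r => g (xx (j r))). intros a b Ha Hb H.
    assert (Tg : forall r, k r = c -> B (xx (j r))).
    { intros r Hr. destruct (Xp (j r)) as [_ [T _]]. unfold tgt in T.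
      rewrite Hsj, Hr, Hc in T. destruct (excluded_middle_informative _) as [_|n]; auto.
      exfalso; apply n; auto. }
    apply jinj, Xi. apply Hg; auto; split; eauto.
  - intros l Hnd Hf Hs0.
    apply (indep I HI L fL fLin fLinj Luz E lt j s k wf tr tot good (length l)); auto.
    apply Forall_forall; intros p Hp. destruct (proj1 (Forall_forall _ _) Hf p Hp) as [r Hr].
    eauto.
Qed.
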